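(* Let $f:\mathbb{R}^n\to\mathbb{R}^n$ be locally Lipschitz, partitioned into blocks $x=(x_1,\dots,x_N)$, $x_j\in\mathbb{R}^{n_j}$, with $X=\prod_j X_j$ and $X_T=\prod_jX_{j,T}$ compact, and assume the sparsity graph is acyclic with leafs $x_{i_1},\dots,x_{i_l}$. Let $I_r$ index the blocks of $\mathbf{P}(x_{i_r})$, $X_{I_r}=\prod_{j\in I_r}X_j\subset\mathbb{R}^{n_r}$, and for $T\ge0$ let $R_T$ be the ROA of $\dot x=f(x)$. Suppose $v^r\in C^1([0,T]\times\mathbb{R}^{n_r})$, $w^r\in C(X_{I_r})$, $r=1,\dots,l$, satisfy $$\sum_{r=1}^l\mathcal{L}_rv^r(t,x_{I_r})\le0 \text{ on }[0,T]\times X,\quad \sum_{r=1}^lv^r(T,x_{I_r})\ge0\text{ on }X_T,$$ $$\sum_{r=1}^lw^r(x_{I_r})\ge0\text{ on }X,\quad \sum_{r=1}^l\big(w^r(x_{I_r})-v^r(0,x_{I_r})\big)\ge l\text{ on }X.$$ Then $\{x\in X:\sum_{r=1}^lw^r(x_{I_r})\ge l\}\supset R_T$.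
   Context: Sparsity graph: nodes are the blocks; $(x_i,x_j)$ is an edge if $f_j$ depends on $x_i$; the past $\mathbf{P}(x_j)$ is $x_j$ together with all nodes with a directed path to $x_j$; a leaf is a node without successor. $x_{I_r}$ is the subvector of $x$ of blocks in $I_r$, $f_{I_r}$ the corresponding components of $f$ (depending only on $x_{I_r}$), and $\mathcal{L}_rv=\partial_tv+\nabla_{x_{I_r}}v\cdot f_{I_r}$. ROA: $R_T=\{x_0\in X:$ the solution of $\dot x=f(x)$, $x(0)=x_0$ satisfies $x(t)\in X$ on $[0,T]$ and $x(T)\in X_T\}$. *)

(* Defs.v *)
From HB Require Import structures.
From mathcomp Require Import all_boot all_order all_algebra.
From mathcomp Require Import all_classical all_reals all_analysis.
Set Implicit Arguments. Unset Strict Implicit. Unset Printing Implicit Defensive.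
Import Order.TTheory GRing.Theory Num.Theory.
Import numFieldNormedType.Exports.
Local Open Scope classical_set_scope.
Local Open Scope ring_scope.

Section Sparse.
Variables (R : realType) (n N : nat).
(* blk k = index of the block containing coordinate k of x in R^n *)
Variable blk : 'I_n -> 'I_N.

Definition coords (I : {set 'I_N}) : {set 'I_n} := [set k | blk k \in I].

Definition projS (S : {set 'I_n}) (x : 'rV[R]_n) : 'rV[R]_#|S| :=
  \row_(k < #|S|) x ord0 (enum_val k).

Definition xblock (j : 'I_N) (x : 'rV[R]_n) := projS (coords [set j]) x.
Definition xsub (I : {set 'I_N}) (x : 'rV[R]_n) := projS (coords I) x.

Variable f : 'rV[R]_n -> 'rV[R]_n.

Definition depends_on (i j : 'I_N) : Prop :=
  exists x y : 'rV[R]_n,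
    (forall k, blk k != i -> x ord0 k = y ord0 k) /\
    xblock j (f x) <> xblock j (f y).

Definition sedge : rel 'I_N := fun i j => (i != j) && `[< depends_on i j >].

Definition sparsity_acyclic : Prop :=
  forall i j, sedge i j -> ~~ connect sedge j i.

Definition is_leaf (j : 'I_N) : bool := [forall k, ~~ sedge j k].
Definition leaves : {set 'I_N} := [set j | is_leaf j].

Definition past (j : 'I_N) : {set 'I_N} := [set i | connect sedge i j].

End Sparse.

Section Sets.
Variables (R : realType) (n N : nat) (blk : 'I_n -> 'I_N).

Definition prodset (Xs : forall j : 'I_N, set 'rV[R]_#|coords blk [set j]|)
  : set 'rV[R]_n := [set x | forall j, Xs j (xblock blk j x)].

Definition prodset_sub (Xs : forall j : 'I_N, set 'rV[R]_#|coords blk [set j]|)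
  (I : {set 'I_N}) : set 'rV[R]_#|coords blk I| :=
  [set y | exists x : 'rV[R]_n, xsub blk I x = y /\
                                 forall j, j \in I -> Xs j (xblock blk j x)].
End Sets.

Section Dyn.
Variables (R : realType) (n : nat).

Definition locally_lipschitz (f : 'rV[R]_n -> 'rV[R]_n) : Prop :=
  forall x, exists r : R, 0 < r /\ exists L : R, forall y z,
    `|x - y| < r -> `|x - z| < r -> `|f y - f z| <= L * `|y - z|.

Definition is_solution (f : 'rV[R]_n -> 'rV[R]_n) (T : R) (phi : R -> 'rV[R]_n)
  : Prop :=
  {within `[0, T], continuous phi} /\
  forall t, 0 < t < T -> is_derive t 1 phi (f (phi t)).

Definition ROA (f : 'rV[R]_n -> 'rV[R]_n) (X XT : set 'rV[R]_n) (T : R)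
  : set 'rV[R]_n :=
  [set x0 | X x0 /\ exists phi : R -> 'rV[R]_n,
     phi 0 = x0 /\ is_solution f T phi /\
     (forall t, 0 <= t <= T -> X (phi t)) /\ XT (phi T)].

Definition C1 (m : nat) (v : R * 'rV[R]_m -> R) : Prop :=
  (forall p, differentiable v p) /\
  (forall h : R * 'rV[R]_m, continuous (fun p => 'd v p h)).

(* L v (t,y) = d_t v + grad_y v . g  (directional derivative along (1, g)) *)
Definition Lie (m : nat) (v : R * 'rV[R]_m -> R) (t : R) (y g : 'rV[R]_m) : R :=
  'd v (t, y) (1, g).
End Dyn.

Arguments prodset {R n N} blk Xs _.
Arguments prodset_sub {R n N} blk Xs I _.
Arguments xsub {R n N} blk I x.
Arguments xblock {R n N} blk j x.
Arguments past {R n N} blk f j.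
Arguments leaves {R n N} blk f.
Arguments sparsity_acyclic {R n N} blk f.

(* Main.v *)
Require Import Defs.
From HB Require Import structures.
From mathcomp Require Import all_boot all_order all_algebra.
From mathcomp Require Import all_classical all_reals all_analysis.
Import Order.TTheory GRing.Theory Num.Theory.
Import numFieldNormedType.Exports.
Local Open Scope classical_set_scope.
Local Open Scope ring_scope.
Set Implicit Arguments. Unset Strict Implicit. Unset Printing Implicit Defensive.

Section Aux.
Variable R : realType.

Lemma projS_continuous n (S : {set 'I_n}) : continuous (@projS R n S).
Proof.
move=> u A /nbhs_ballP[e /= e0 eA].
apply/nbhs_ballP; exists e => //= w [_ uw]; apply: eA; split => // i j.
by apply: (le_lt_trans _ (uw i (enum_val j))); rewrite !mxE (ord1 i).
Qed.

Lemma projS_linear n (S : {set 'I_n}) : linear (@projS R n S).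
Proof. by move=> a x y; apply/rowP => k; rewrite !mxE. Qed.

Definition projL n (S : {set 'I_n}) : {linear 'rV[R]_n -> 'rV[R]_#|S|} :=
  HB.pack (@projS R n S) (GRing.isLinear.Build _ _ _ _ (@projS R n S) (projS_linear S)).

Lemma projS_diff n (S : {set 'I_n}) x :
  differentiable (@projS R n S) x /\ 'd (@projS R n S) x = @projS R n S :> ('rV[R]_n -> 'rV[R]_#|S|).
Proof.
have hc : continuous (projL S) by exact: projS_continuous.
split; first exact: (linear_differentiable (f := projL S) x hc).
exact: (diff_lin (f := projL S) x hc).
Qed.

Lemma comp_is_derive n (S : {set 'I_n}) (v : R * 'rV[R]_#|S| -> R)
   (phi : R -> 'rV[R]_n) (t : R) (d : 'rV[R]_n) :
  (forall p, differentiable v p) -> is_derive t 1 phi d ->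
  is_derive t 1 (fun s => v (s, projS S (phi s))) ('d v (t, projS S (phi t)) (1, projS S d)).
Proof.
move=> dv dphi.
have dphit : differentiable phi t by apply/derivable1_diffP; exact: ex_derive.
have [did didv] := is_diff_id t.
have dP : differentiable (fun s => projS S (phi s)) t.
  exact: (differentiable_comp dphit (projS_diff S _).1).
have dG : differentiable (fun s => (s, projS S (phi s))) t.
  exact: (differentiable_pair did dP).
have dvG := differentiable_comp dG (dv _).
have -> : 'd v (t, projS S (phi t)) (1, projS S d) =
   'D_1 (v \o (fun s => (s, projS S (phi s)))) t.
  rewrite deriveE // (diff_comp dG (dv _)) /=. rewrite (diff_pair did dP) /= didv.
  rewrite (diff_comp dphit (projS_diff S _).1) (projS_diff S _).2 /=.
  by rewrite diff1E // scale1r derive1E derive_val.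
apply: derivableP; exact: diff_derivable.
Qed.

Lemma is_derive_bigsum (I : Type) (r : seq I) (P : pred I) (h : I -> R -> R)
  (dh : I -> R) (x : R) :
  (forall i, P i -> is_derive x 1 (h i) (dh i)) ->
  is_derive x 1 (fun s => \sum_(i <- r | P i) h i s) (\sum_(i <- r | P i) dh i).
Proof.
move=> Hd; elim: r => [|a r IH].
  rewrite big_nil.
  have -> : (fun s => \sum_(i <- [::] | P i) h i s) = cst 0.
    by apply: funext => s; rewrite big_nil.
  exact: is_derive_cst.
rewrite big_cons.
have -> : (fun s => \sum_(i <- a :: r | P i) h i s) =
   (fun s => if P a then h a s + \sum_(i <- r | P i) h i s
             else \sum_(i <- r | P i) h i s).
  by apply: funext => s; rewrite big_cons.
case Pa: (P a) => //.
exact: (is_deriveD (Hd a Pa) IH).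
Qed.

Lemma cvg_bigsum (T : Type) (F : set_system T) {FF : Filter F} (I : Type)
  (r : seq I) (P : pred I) (h : I -> T -> R) (a : I -> R) :
  (forall i, P i -> h i @ F --> a i) ->
  (fun s => \sum_(i <- r | P i) h i s) @ F --> \sum_(i <- r | P i) a i.
Proof.
move=> Hc; elim: r => [|b r IH].
  rewrite big_nil.
  have -> : (fun s => \sum_(i <- [::] | P i) h i s) = cst 0.
    by apply: funext => s; rewrite big_nil.
  exact: cvg_cst.
rewrite big_cons.
have -> : (fun s => \sum_(i <- b :: r | P i) h i s) =
   (fun s => if P b then h b s + \sum_(i <- r | P i) h i s
             else \sum_(i <- r | P i) h i s).
  by apply: funext => s; rewrite big_cons.
case Pb: (P b) => //.
exact: (cvgD (Hc b Pb) IH).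
Qed.

End Aux.

Theorem proposition3 (R : realType) (n N : nat) (blk : 'I_n -> 'I_N)
  (f : 'rV[R]_n -> 'rV[R]_n)
  (Xs XTs : forall j : 'I_N, set 'rV[R]_#|coords blk [set j]|)
  (T : R)
  (v : forall i : 'I_N, R * 'rV[R]_#|coords blk (past blk f i)| -> R)
  (w : forall i : 'I_N, 'rV[R]_#|coords blk (past blk f i)| -> R) :
  (forall j : 'I_N, exists k : 'I_n, blk k = j) ->
  locally_lipschitz f ->
  compact (prodset blk Xs) ->
  compact (prodset blk XTs) ->
  sparsity_acyclic blk f ->
  0 <= T ->
  (forall i, i \in leaves blk f -> C1 (v i)) ->
  (forall i, i \in leaves blk f ->
     {within prodset_sub blk Xs (past blk f i), continuous (w i)}) ->
  (forall t x, 0 <= t <= T -> prodset blk Xs x ->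
     \sum_(i in leaves blk f)
        Lie (v i) t (xsub blk (past blk f i) x) (xsub blk (past blk f i) (f x))
       <= 0) ->
  (forall x, prodset blk XTs x ->
     0 <= \sum_(i in leaves blk f) v i (T, xsub blk (past blk f i) x)) ->
  (forall x, prodset blk Xs x ->
     0 <= \sum_(i in leaves blk f) w i (xsub blk (past blk f i) x)) ->
  (forall x, prodset blk Xs x ->
     (#|leaves blk f|%:R <=
      \sum_(i in leaves blk f)
        (w i (xsub blk (past blk f i) x) - v i (0, xsub blk (past blk f i) x)))) ->
  ROA f (prodset blk Xs) (prodset blk XTs) T
    `<=` [set x | prodset blk Xs x /\
                  #|leaves blk f|%:R <=
                  \sum_(i in leaves blk f) w i (xsub blk (past blk f i) x)].
Proof.
move=> _ _ _ _ _ T0 C1v _ hL hT _ hWV x0 [Xx0 [phi [phi0 [[phic phid] [Xphi XTT]]]]].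
split => //.
pose V s := \sum_(i in leaves blk f) v i (s, xsub blk (past blk f i) (phi s)).
have VT : 0 <= V T by apply: hT.
have V0T : V T <= V 0.
  have [->|Tn0] := eqVneq T 0; first by [].
  have Tp : 0 < T by rewrite lt_def Tn0 T0.
  have Hd : forall t, t \in `]0, T[ -> is_derive t 1 V
      (\sum_(i in leaves blk f) Lie (v i) t (xsub blk (past blk f i) (phi t))
          (xsub blk (past blk f i) (f (phi t)))).
    move=> t tin; apply: is_derive_bigsum => i iL.
    apply: comp_is_derive; first exact: (C1v i iL).1.
    by apply: phid; rewrite in_itv /= in tin.
  apply: (ler0_derive1_le_cc (f := V) (a := 0) (b := T)).
  - by move=> t /Hd h; exact: ex_derive.
  - move=> t tin; rewrite derive1E (@derive_val _ _ _ _ _ _ _ (Hd t tin)).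
    have tr : 0 <= t <= T.
      by rewrite in_itv /= in tin; case/andP: tin => /ltW -> /ltW ->.
    by apply: hL => //; apply: Xphi.
  - move=> s; apply: cvg_bigsum => i iL.
    have h2 := cvg_comp _ _ (phic s) (@projS_continuous R n (coords blk (past blk f i)) (phi s)).
    have h1 : (fun s0 : subspace `[0, T] => s0 : R) @ nbhs (s : subspace `[0, T]) --> (s : R).
      by apply: (continuous_subspaceT (f := id)) => x; exact: cvg_id.
    have h3 := differentiable_continuous ((C1v i iL).1 (s : R, xsub blk (past blk f i) (phi s))).
    apply: (cvg_comp _ _ (cvg_pair h1 h2) h3).
  - by rewrite in_itv /= lexx T0.
  - by rewrite in_itv /= lexx T0.
  - exact: T0.
have := hWV x0 Xx0; rewrite sumrB -phi0 => H.
apply: (le_trans H); rewrite lerBlDr lerDl.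
exact: (le_trans VT V0T).
Qed.
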